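(* Let $\mathcal A$ be a toric arrangement in $T$, $X=X_\Delta$ a good toric variety for $\mathcal A$, $B=H^*(X,\mathbb Z)$, and $G\in\mathcal L'$. Let $I\subseteq B$ be the kernel of the restriction map $H^*(X,\mathbb Z)\to H^*(G,\mathbb Z)$. Let $P_G(t)\in B[t]$ be a good lifting of the Chern polynomial of the normal bundle $N_GX$. Then the ideal $(tI,\,P_G(-t))\subseteq B[t]$ does not depend on the choice of the good lifting $P_G(t)$.
   Context: $T$ is a complex algebraic torus with character lattice $X^*(T)$; a layer is $\mathcal K_{\Gamma,\phi}=\{t\in T: x_\chi(t)=\phi(\chi)\ \forall\chi\in\Gamma\}$ with $\Gamma$ a split direct summand of $X^*(T)$ and $\phi:\Gamma\to\mathbb C^*$ a homomorphism; a toric arrangement $\mathcal A$ is a finite set of layers. A good toric variety for $\mathcal A$ is a smooth projective toric variety $X_\Delta$ such that for each layer which is a connected component of an intersection of layers of $\mathcal A$, the lattice $\Gamma$ has an integral basis $\chi_1,\dots,\chi_s$ which, for every cone of $\Delta$ with ray generators $r_1,\dots,r_h$ and after changing signs of some $\chi_i$, has all pairings $\langle\chi_i,r_j\rangle\ge0$ or all $\le0$. $\mathcal L'$ is the set of connected components of intersections of closures in $X$ of layers of $\mathcal A$. For $G\in\mathcal L'$ of codimension $d$, a polynomial $P_G(t)\in B[t]$ is a good lifting of the Chern polynomial of $N_GX$ if (1) $P_G(0)$ is the cohomology class dual to the homology class of $G$, and (2) its image in $H^*(G,\mathbb Z)[t]$ under restriction of coefficients is $t^d+c_1(N_GX)t^{d-1}+\dots+c_d(N_GX)$.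 *)

(* Defs.v *)
(* Algebraic abstraction of the geometric setting:
   B = H^*(X,Z), HG = H^*(G,Z), rho : B -> HG the restriction map. *)
From HB Require Import structures.
From mathcomp Require Import all_boot all_order all_algebra.
Set Implicit Arguments. Unset Strict Implicit. Unset Printing Implicit Defensive.
Import GRing.Theory.
Local Open Scope ring_scope.

Definition ker_pred (B HG : comNzRingType) (rho : {rmorphism B -> HG}) : pred B :=
  [pred b | rho b == 0].

Definition chern_poly (HG : comNzRingType) (d : nat) (cs : nat -> HG) : {poly HG} :=
  'X^d + \sum_(1 <= i < d.+1) (cs i)%:P * 'X^(d - i).

(* Good lifting P of the Chern polynomial of N_G X, where gclass is the class
   in B dual to the homology class of G. *)
Definition good_lifting (B HG : comNzRingType) (rho : {rmorphism B -> HG})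
    (gclass : B) (d : nat) (cs : nat -> HG) (P : {poly B}) : Prop :=
  P.[0] = gclass /\ map_poly rho P = chern_poly d cs.

Definition in_ideal_tI_P (B : comNzRingType) (I : pred B) (P : {poly B})
    (f : {poly B}) : Prop :=
  exists (n : nat) (r : 'I_n -> {poly B}) (a : 'I_n -> B) (s : {poly B}),
    (forall i, a i \in I) /\
    f = \sum_(i < n) r i * ('X * (a i)%:P) + s * (P \Po (- 'X)).

(* Main.v *)
Require Import Defs.
From HB Require Import structures.
From mathcomp Require Import all_boot all_order all_algebra.
From mathcomp Require Import ring.
Import GRing.Theory.
Local Open Scope ring_scope.

Lemma comp_decomp (B : comNzRingType) (D : {poly B}) : D`_0 = 0 ->
  exists m (c : 'I_m -> {poly B}),
    D \Po (- 'X) = \sum_(i < m) c i * ('X * (D`_i.+1)%:P).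
Proof.
move=> D0; rewrite comp_polyE; case: (size D) => [|m].
  by exists 0%N, (fun _ => 0); rewrite !big_ord0.
rewrite big_ord_recl D0 scale0r add0r.
exists m, (fun i : 'I_m => (-1) ^+ i.+1 * 'X ^+ i).
apply: eq_bigr => i _; rewrite -mul_polyC.
have -> : (lift ord0 i : nat) = i.+1 by [].
rewrite [(- 'X) ^+ _]exprNn !exprS. ring.
Qed.

Lemma one_dir (B HG : comNzRingType) (rho : {rmorphism B -> HG})
    (gclass : B) (d : nat) (cs : nat -> HG) (P Q : {poly B}) :
  good_lifting rho gclass d cs P ->
  good_lifting rho gclass d cs Q ->
  forall f : {poly B},
    in_ideal_tI_P (ker_pred rho) P f -> in_ideal_tI_P (ker_pred rho) Q f.
Proof.
move=> [P0 Pm] [Q0 Qm] f [n [r [a [s [Ha ->]]]]].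
set D := P - Q.
have D0 : D`_0 = 0 by rewrite /D coefB -!horner_coef0 P0 Q0 subrr.
have DI : forall k, rho D`_k = 0.
  by move=> k; rewrite -coef_map /D rmorphB /= Pm Qm subrr coef0.
have [m [c Hc]] := @comp_decomp _ D D0.
have -> : P = Q + D by rewrite /D addrC subrK.
exists (n + m)%N,
  (fun i => match split i with inl k => r k | inr k => s * c k end),
  (fun i => match split i with inl k => a k | inr k => D`_k.+1 end), s.
split.
  move=> i; case: (split i) => k; first exact: Ha.
  by rewrite inE /= DI.
rewrite big_split_ord /=.
under [X in _ = X + _ + _]eq_bigr => i _ do rewrite (unsplitK (inl i : 'I_n + 'I_m) : split (lshift m i) = inl i).
under [X in _ = _ + X + _]eq_bigr => i _ do rewrite (unsplitK (inr i : 'I_n + 'I_m) : split (rshift n i) = inr i).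
rewrite linearD /= mulrDr Hc mulr_sumr.
under [X in _ = _ + X + _]eq_bigr => i _ do rewrite -mulrA.
by rewrite -addrA [s * _ + _]addrC.
Qed.

Theorem mainTheorem8 (B HG : comNzRingType) (rho : {rmorphism B -> HG})
    (gclass : B) (d : nat) (cs : nat -> HG) (P Q : {poly B}) :
  good_lifting rho gclass d cs P ->
  good_lifting rho gclass d cs Q ->
  forall f : {poly B},
    in_ideal_tI_P (ker_pred rho) P f <-> in_ideal_tI_P (ker_pred rho) Q f.
Proof.
move=> HP HQ f; split; [exact: one_dir HP HQ f | exact: one_dir HQ HP f].
Qed.
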